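(* Let $(M,g)$ be any Riemannian $n$-manifold and $p,q\in\mathbb R$. If $n\geq 3$, then $\tilde K(\Pi)>0$ for every vertical 2-plane $\Pi$ in $T(BM_q)$ (equivalently, the metric induced by $h_{p,q}$ on the fibres $T_xM\cap BM_q$ has positive sectional curvature) if and only if $(p,q)\in\Gamma$. If $n=2$, the same holds if and only if $(p,q)\in\Gamma'$.
   Context: $\langle\cdot,\cdot\rangle=g$, $|e|^2=\langle e,e\rangle$, $\omega(e)=(1+|e|^2)^{-1}$. $h_{p,q}$ is the generalised Cheeger–Gromoll metric on $TM$: $h_{p,q}(X^h,Y^h)=\langle X,Y\rangle$, $h_{p,q}(X^h,Y^v)=0$, $h_{p,q}(X^v,Y^v)=\omega^p(\langle X,Y\rangle+q\langle X,e\rangle\langle Y,e\rangle)$, where $X^h,X^v$ are horizontal and vertical lifts w.r.t. the Levi-Civita connection; it is Riemannian on $BM_q=\{e:q|e|^2>-1\}$; $\tilde K$ is its sectional curvature; a 2-plane is vertical if it is spanned by vertical vectors. Let $\lambda(p)=8(1-p)/(8+p)$ for $p\neq-8$. Define $\Gamma_+^1=\{(p,q): -8<p\le -2,\ q>\lambda(p)\}$, $\Gamma_+^2=\{(p,q): -2\le p\le 0,\ 2p+q>0\}$, $\Gamma_+^3=\{(p,q): 0\le p\le 1,\ q>0\}$, $\Gamma_+=\Gamma_+^1\cup\Gamma_+^2\cup\Gamma_+^3$; $\Gamma_-=\{(p,q): p+q=1,\ q<0\}$, $\Gamma_-'=\{(p,q): p+q\ge1,\ q<0\}$, $\Gamma_Z=\{(p,0):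 0<p\le 2\}$, $\Gamma_Z'=\{(p,0): p>0\}$; $\Gamma=\Gamma_-\cup\Gamma_Z\cup\Gamma_+$ and $\Gamma'=\Gamma_-'\cup\Gamma_Z'\cup\Gamma_+$. *)

(* Defs.v *)
From HB Require Import structures.
From mathcomp Require Import all_boot all_order all_algebra.
From mathcomp Require Import all_classical all_reals all_analysis.
Set Implicit Arguments. Unset Strict Implicit. Unset Printing Implicit Defensive.
Import Order.TTheory GRing.Theory Num.Theory.
Import numFieldNormedType.Exports.
Local Open Scope ring_scope.

(* A fibre T_xM of (M,g) is identified, via an orthonormal frame of (T_xM,g_x),
   with Euclidean space R^n = 'rV[R]_n, the point e being the fibre coordinate
   and the vertical lift of X being the coordinate vector X. *)

Section Fibre.
Variables (R : realType) (n : nat) (p q : R).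

Definition inner (X Y : 'rV[R]_n) : R := \sum_(i < n) X ord0 i * Y ord0 i.
Definition sqnorm (e : 'rV[R]_n) : R := inner e e.
Definition omega (e : 'rV[R]_n) : R := (1 + sqnorm e)^-1.

Definition BMq (e : 'rV[R]_n) : Prop := q * sqnorm e > -1.

(* components of h_{p,q} on vertical vectors at the point e:
   h(d_i^v, d_j^v) = omega^p (delta_ij + q e_i e_j) *)
Definition gmat (e : 'rV[R]_n) : 'M[R]_n :=
  \matrix_(i, j) (omega e `^ p * ((i == j)%:R + q * e ord0 i * e ord0 j)).

Definition ginv (e : 'rV[R]_n) : 'M[R]_n := invmx (gmat e).

Definition basis_vec (k : 'I_n) : 'rV[R]_n := delta_mx ord0 k.

Definition pd (k : 'I_n) (f : 'rV[R]_n -> R) (e : 'rV[R]_n) : R :=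
  'D_(basis_vec k) f e.

Definition chr1 (l i j : 'I_n) (e : 'rV[R]_n) : R :=
  2^-1 * (pd i (fun y => gmat y j l) e + pd j (fun y => gmat y i l) e
          - pd l (fun y => gmat y i j) e).
Definition chr2 (m i j : 'I_n) (e : 'rV[R]_n) : R :=
  \sum_(l < n) ginv e m l * chr1 l i j e.

(* R(d_i,d_j)d_k = \sum_l riem l i j k d_l, with the convention
   R(X,Y)Z = nabla_X nabla_Y Z - nabla_Y nabla_X Z - nabla_[X,Y] Z *)
Definition riem (l i j k : 'I_n) (e : 'rV[R]_n) : R :=
  pd i (chr2 l j k) e - pd j (chr2 l i k) e
  + \sum_(m < n) (chr2 l i m e * chr2 m j k e - chr2 l j m e * chr2 m i k e).

Definition hv (e X Y : 'rV[R]_n) : R :=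
  \sum_(i < n) \sum_(j < n) X ord0 i * gmat e i j * Y ord0 j.

Definition RXYY (e X Y : 'rV[R]_n) : 'rV[R]_n :=
  \row_(l < n) \sum_(i < n) \sum_(j < n) \sum_(k < n)
     X ord0 i * Y ord0 j * Y ord0 k * riem l i j k e.

Definition sectional (e X Y : 'rV[R]_n) : R :=
  hv e (RXYY e X Y) X / (hv e X X * hv e Y Y - hv e X Y ^+ 2).

Definition vertical_positive : Prop :=
  forall e X Y : 'rV[R]_n, BMq e -> row_free (col_mx X Y) ->
    0 < sectional e X Y.

End Fibre.

Section Regions.
Variable R : realType.
Definition lam (p : R) : R := 8 * (1 - p) / (8 + p).
Definition Gamma_plus (p q : R) : Prop :=
  (-8 < p <= -2 /\ q > lam p) \/ (-2 <= p <= 0 /\ 2 * p + q > 0)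
  \/ (0 <= p <= 1 /\ q > 0).
Definition Gamma_minus (p q : R) : Prop := p + q = 1 /\ q < 0.
Definition Gamma_minus' (p q : R) : Prop := p + q >= 1 /\ q < 0.
Definition Gamma_Z (p q : R) : Prop := q = 0 /\ 0 < p <= 2.
Definition Gamma_Z' (p q : R) : Prop := q = 0 /\ 0 < p.
Definition Gamma (p q : R) : Prop :=
  Gamma_minus p q \/ Gamma_Z p q \/ Gamma_plus p q.
Definition Gamma' (p q : R) : Prop :=
  Gamma_minus' p q \/ Gamma_Z' p q \/ Gamma_plus p q.
End Regions.

(* Main.v *)
Require Import Defs.
From HB Require Import structures.
From mathcomp Require Import all_boot all_order all_algebra.
From mathcomp Require Import all_classical all_reals all_analysis.
From mathcomp Require Import ring lra.
Import Order.TTheory GRing.Theory Num.Theory.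
Local Open Scope ring_scope.

Module Aux.
Set Implicit Arguments. Unset Strict Implicit. Unset Printing Implicit Defensive.
Import numFieldNormedType.Exports.


Section S.
Variable R : realType.
Variable n : nat.
Implicit Types (x : 'rV[R]_n).

Lemma D_line (f : 'rV[R]_n -> R) x (v : 'rV[R]_n) :
  'D_v f x = 'D_1 (fun h : R => f (h *: v + x)) 0.
Proof.
rewrite /derive; set g1 := fun h => h^-1 *: _; set g2 := fun h => h^-1 *: _.
suff -> : g1 = g2 by [].
by rewrite funeqE /g1 /g2 => h /=; rewrite addr0 scale0r add0r [_%:A]mulr1.
Qed.

Lemma is_derive_chain (f : 'rV[R]_n -> R) (g : R -> R) x (v : 'rV[R]_n) df dg :
  is_derive x v f df -> is_derive (f x) 1 g dg ->
  is_derive x v (fun y => g (f y)) (dg * df).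
Proof.
move=> [fd fv] [gd gv].
have H1 : derivable (fun h : R => f (h *: v + x)) 0 1 by exact: ((derivable1P f x v).1 fd).
have Hg : derivable g (f (0 *: v + x)) 1 by rewrite scale0r add0r; exact: gd.
have Hc : derivable (fun h : R => g (f (h *: v + x))) 0 1.
  apply/derivable1_diffP; apply: (differentiable_comp (f := fun h : R => f (h *: v + x))).
    exact/derivable1_diffP.
  exact/derivable1_diffP.
split; first exact: ((derivable1P _ x v).2 Hc).
rewrite D_line -derive1E.
have := derive1_comp H1 Hg; rewrite /comp => ->.
rewrite !derive1E -D_line fv scale0r add0r gv //.
Qed.

Section W.
Variable V : normedModType R.
Implicit Types (f g : V -> R) (a v : V) (df dg : R).
Lemma dD f g a v df dg : is_derive a v f df -> is_derive a v g dg ->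
  is_derive a v (fun y => f y + g y) (df + dg).
Proof. by move=> H1 H2; exact: (is_deriveD H1 H2). Qed.
Lemma dB f g a v df dg : is_derive a v f df -> is_derive a v g dg ->
  is_derive a v (fun y => f y - g y) (df - dg).
Proof. by move=> H1 H2; exact: (is_deriveB H1 H2). Qed.
Lemma dN f a v df : is_derive a v f df ->
  is_derive a v (fun y => - f y) (- df).
Proof. by move=> H1; exact: (is_deriveN H1). Qed.
Lemma dM f g a v df dg : is_derive a v f df -> is_derive a v g dg ->
  is_derive a v (fun y => f y * g y) (f a * dg + g a * df).
Proof. by move=> H1 H2; exact: (is_deriveM H1 H2). Qed.
Lemma dC (c : R) a v : is_derive a v (fun _ : V => c) 0.
Proof. exact: is_derive_cst. Qed.
Lemma dV f a v df : f a != 0 -> is_derive a v f df ->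
  is_derive a v (fun y => (f y)^-1) (- (f a) ^- 2 * df).
Proof.
move=> fa [H1 H2]; split; first exact: derivableV.
by rewrite deriveV // H2.
Qed.
Lemma dS (m : nat) (F : 'I_m -> V -> R) a v (dF : 'I_m -> R) :
  (forall i, is_derive a v (F i) (dF i)) ->
  is_derive a v (fun y => \sum_(i < m) F i y) (\sum_(i < m) dF i).
Proof.
move=> H; have := is_derive_sum H.
suff -> : (\sum_(i < m) F i) = (fun y => \sum_(i < m) F i y) by [].
by apply: funext => y; rewrite fct_sumE.
Qed.
End W.

Lemma dId (a v : R) : is_derive a v (fun y : R => y) v.
Proof. exact: is_derive_id. Qed.

Lemma is_derive_coord x (v : 'rV[R]_n) (i : 'I_n) :
  is_derive x v (fun y : 'rV[R]_n => y ord0 i) (v ord0 i).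
Proof.
have E : (fun h : R => (h *: v + x) ord0 i) = (fun h => h * v ord0 i + x ord0 i).
  by apply: funext => h; rewrite !mxE.
have H : is_derive (0:R) (1:R) (fun h : R => h * v ord0 i + x ord0 i) (v ord0 i).
  apply: is_derive_eq.
  by rewrite scaler0 add0r addr0 [_%:A]mulr1.
case: H => H1 H2; split.
  by apply/derivable1P; rewrite E.
by rewrite D_line E H2.
Qed.
End S.

Ltac dsolve := repeat match goal with |- is_derive _ _ _ _ =>
  first [ exact: dC | exact: is_derive_coord | apply: dD | apply: dB | apply: dM | apply: dN ] end.



Section T.
Variable R : realType.
Variable n : nat.
Variables p q : R.
Implicit Types (x y e : 'rV[R]_n).


Definition dl (i j : 'I_n) : R := (i == j)%:R.
Lemma dlC i j : dl i j = dl j i. Proof. by rewrite /dl eq_sym. Qed.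
Lemma bvE k i : basis_vec R k ord0 i = dl i k.
Proof. by rewrite /basis_vec mxE eqxx. Qed.

Lemma sum_dl_l (w : 'I_n -> R) a : \sum_m dl a m * w m = w a.
Proof.
rewrite (bigD1 a) //= /dl eqxx mul1r big1 ?addr0 // => m /negbTE.
by rewrite eq_sym => ->; rewrite mul0r.
Qed.
Lemma sum_dl_r (w : 'I_n -> R) a : \sum_m dl m a * w m = w a.
Proof. by under eq_bigr do rewrite dlC; exact: sum_dl_l. Qed.

Definition sf y := 1 + sqnorm y.
Definition uf y := 1 + q * sqnorm y.
Definition Phi y := omega y `^ p.
Definition psi y := - p / sf y.
Definition Af y := (q * sf y + p) / (sf y * uf y).
Definition Bf y := q * p / (sf y * uf y).

Lemma sqnorm_ge0 y : 0 <= sqnorm y.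
Proof. by rewrite /sqnorm /inner; apply: sumr_ge0 => i _; rewrite -expr2 sqr_ge0. Qed.
Lemma sf_gt0 y : 0 < sf y.
Proof. by rewrite /sf; have := sqnorm_ge0 y; lra. Qed.
Lemma omegaE y : omega y = (sf y)^-1. Proof. by []. Qed.
Lemma omega_gt0 y : 0 < omega y.
Proof. by rewrite omegaE invr_gt0 sf_gt0. Qed.
Lemma Phi_gt0 y : 0 < Phi y.
Proof. by rewrite /Phi powR_gt0 // omega_gt0. Qed.

Lemma d_sq y k : is_derive y (basis_vec R k) (@sqnorm R n) (2 * y ord0 k).
Proof.
rewrite /sqnorm /inner.
apply: is_derive_eq.
  refine (@dS _ _ n (fun i (z : 'rV[R]_n) => z ord0 i * z ord0 i) _ _ _ _) => i.
  by apply: dM; apply: is_derive_coord.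
under eq_bigr do rewrite bvE.
rewrite /=.
have -> : \sum_(i < n) (y ord0 i * dl i k + y ord0 i * dl i k) =
   2 * \sum_(i < n) (dl k i * y ord0 i).
  rewrite mulr_sumr; apply: eq_bigr => i _; rewrite dlC; ring.
by rewrite sum_dl_l.
Qed.

Lemma pdE k (f : 'rV[R]_n -> R) y df : is_derive y (basis_vec R k) f df -> pd k f y = df.
Proof. by move=> H; rewrite /pd derive_val. Qed.

Lemma d_omega y k : is_derive y (basis_vec R k) (@omega R n)
   (- (sf y) ^- 2 * (2 * y ord0 k)).
Proof.
apply: (dV (f := fun z => 1 + sqnorm z)).
  by have := sf_gt0 y; rewrite /sf; lra.
apply: is_derive_eq; first by apply: dD; try exact: dC; exact: d_sq.
by rewrite add0r.
Qed.

Lemma omega_pow y : omega y `^ (p - 1) = Phi y * sf y.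
Proof.
have o0 : omega y != 0 by rewrite gt_eqF // omega_gt0.
rewrite /Phi powRD; last by rewrite o0 implybT.
by rewrite powR_inv1 ?omegaE ?invrK // ltW // omega_gt0.
Qed.

Lemma d_Phi y k : is_derive y (basis_vec R k) (@Phi) (Phi y * (2 * psi y * y ord0 k)).
Proof.
apply: is_derive_eq.
  apply: (is_derive_chain (f := @omega R n) (g := fun a => a `^ p)); first exact: d_omega.
  by apply: is_derive1_powR; exact: omega_gt0.
rewrite omega_pow /psi.
have := sf_gt0 y => s0.
by field; rewrite gt_eqF.
Qed.

Lemma gmatE y i j : gmat p q y i j = Phi y * (dl i j + q * y ord0 i * y ord0 j).
Proof. by rewrite /gmat mxE. Qed.

Lemma d_gmat y k i j : is_derive y (basis_vec R k) (fun z => gmat p q z i j)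
  (Phi y * (2 * psi y * y ord0 k * (dl i j + q * y ord0 i * y ord0 j)
            + q * (dl i k * y ord0 j + y ord0 i * dl j k))).
Proof.
have -> : (fun z => gmat p q z i j) = (fun z => Phi z * (dl i j + q * z ord0 i * z ord0 j)).
  by apply: funext => z; rewrite gmatE.
apply: is_derive_eq.
  apply: dM; first exact: d_Phi.
  dsolve.
rewrite !bvE; ring.
Qed.

Lemma chr1E l i j y : chr1 p q l i j y =
  Phi y * (psi y * (y ord0 i * dl j l + y ord0 j * dl i l - y ord0 l * dl i j)
     + psi y * q * y ord0 i * y ord0 j * y ord0 l + q * dl i j * y ord0 l).
Proof.
rewrite /chr1 !(pdE (d_gmat _ _ _ _)).
rewrite (dlC j i) (dlC l i) (dlC l j).
field.
by [].
Qed.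

Lemma sum_c_dl (c : 'I_n -> R) a : \sum_m c m * dl a m = c a.
Proof. by under eq_bigr do rewrite mulrC; exact: sum_dl_l. Qed.

Lemma sum_quad2 (c : 'I_n -> R) (x y z : 'I_n) (a1 b1 a2 a3 b2 : R) :
  \sum_l (a1 * dl x l + b1 * c l) * (a2 * dl y l + a3 * dl z l + b2 * c l)
  = a1 * (a2 * dl y x + a3 * dl z x + b2 * c x)
    + b1 * (a2 * c y + a3 * c z + b2 * \sum_l c l * c l).
Proof.
rewrite (eq_bigr (fun l => dl x l * (a1 * (a2 * dl y l + a3 * dl z l + b2 * c l))
   + (b1 * a2 * (c l * dl y l) + b1 * a3 * (c l * dl z l) + b1 * b2 * (c l * c l)))); last first.
  by move=> l _; ring.
rewrite big_split /= sum_dl_l !big_split /= -!mulr_sumr !sum_c_dl; ring.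
Qed.

Lemma uf_gt0 y : BMq q y -> 0 < uf y.
Proof. by rewrite /BMq /uf => H; lra. Qed.

Definition Gi y : 'M[R]_n := \matrix_(m, l) ((Phi y)^-1 * (dl m l - q / uf y * y ord0 m * y ord0 l)).

Lemma gmat_Gi y : BMq q y -> gmat p q y *m Gi y = 1%:M.
Proof.
move=> By; have u0 := uf_gt0 By; have P0 := Phi_gt0 y.
apply/matrixP => i j; rewrite !mxE.
rewrite (eq_bigr (fun l => (Phi y * dl i l + Phi y * q * y ord0 i * y ord0 l) *
   ((Phi y)^-1 * dl j l + 0 * dl j l + (- (Phi y)^-1 * q / uf y * y ord0 j) * y ord0 l))); last first.
  by move=> l _; rewrite gmatE !mxE (dlC l j); ring.
rewrite sum_quad2 (dlC j i) -[\sum_l _ * _]/(sqnorm y).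
rewrite /dl eq_sym; have -> : uf y = 1 + q * sqnorm y by [].
rewrite /uf in u0; field; by rewrite !gt_eqF.
Qed.

Lemma ginvE y : BMq q y -> ginv p q y = Gi y.
Proof.
move=> By; have H := gmat_Gi By; have [uA _] := mulmx1_unit H.
by rewrite /ginv -[LHS]mulmx1 -H mulmxA mulVmx // mul1mx.
Qed.

Lemma chr2E m i j y : BMq q y -> chr2 p q m i j y =
  psi y * (y ord0 i * dl j m + y ord0 j * dl i m) + Af y * dl i j * y ord0 m
  + Bf y * y ord0 i * y ord0 j * y ord0 m.
Proof.
move=> By; have u0 := uf_gt0 By; have P0 := Phi_gt0 y; have s0 := sf_gt0 y.
rewrite /chr2 ginvE //.
rewrite (eq_bigr (fun l => ((Phi y)^-1 * dl m l + (- (Phi y)^-1 * q / uf y * y ord0 m) * y ord0 l) *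
   ((Phi y * psi y * y ord0 i) * dl j l + (Phi y * psi y * y ord0 j) * dl i l
     + (Phi y * (- psi y * dl i j + psi y * q * y ord0 i * y ord0 j + q * dl i j)) * y ord0 l))); last first.
  by move=> l _; rewrite chr1E !mxE; ring.
rewrite sum_quad2 -[\sum_l _ * _]/(sqnorm y).
rewrite /Af /Bf /psi; have -> : uf y = 1 + q * sqnorm y by [].
have -> : sf y = 1 + sqnorm y by [].
rewrite /uf /sf in u0 s0.
field; by rewrite !gt_eqF.
Qed.
End T.




Section U.
Local Open Scope classical_set_scope.
Variable R : realType.
Variable n : nat.
Variables p q : R.
Implicit Types (e : 'rV[R]_n).
Local Notation dl := (@dl R n).

Lemma sqnorm_cont e : {for e, continuous (@sqnorm R n)}.
Proof.
have : differentiable (\sum_(i < n) ((fun N : 'rV[R]_n => N ord0 i : R^o) * (fun N => N ord0 i))) e.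
  apply: differentiable_sum => i; apply: differentiableM; exact: differentiable_coord.
move/differentiable_continuous.
suff -> : (\sum_(i < n) ((fun N : 'rV[R]_n => N ord0 i : R^o) * (fun N => N ord0 i))) = @sqnorm R n by [].
by apply: funext => y; rewrite fct_sumE.
Qed.

Lemma near_BMq e : BMq q e -> \forall y \near e, BMq q y.
Proof.
move=> H.
have c : (fun y => q * sqnorm y) @ e --> q * sqnorm e.
  have h := sqnorm_cont (e:=e). exact: (cvgMl_tmp (a := q) h).
have := cvgr_gt _ c _ H.
move=> h; exact: h.
Qed.

Definition dpsi e := p / sf e ^+ 2.
Definition dAf e := q / (sf e * uf q e) - (q * sf e + p) * (uf q e + q * sf e) / (sf e * uf q e) ^+ 2.
Definition dBf e := - (q * p) * (uf q e + q * sf e) / (sf e * uf q e) ^+ 2.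

Lemma d_sf e k : is_derive e (basis_vec R k) (@sf R n) (2 * e ord0 k).
Proof.
apply: is_derive_eq; first by apply: dD; try exact: dC; exact: d_sq.
by rewrite add0r.
Qed.

Lemma d_uf e k : is_derive e (basis_vec R k) (uf q) (q * (2 * e ord0 k)).
Proof.
apply: is_derive_eq.
  apply: (dD (f := fun _ => 1) (g := fun y => q * sqnorm y)); try exact: dC.
  apply: dM; try exact: dC.
  exact: d_sq.
by rewrite /=; ring.
Qed.

Lemma d_psi e k : is_derive e (basis_vec R k) (psi p) (2 * e ord0 k * dpsi e).
Proof.
have s0 := sf_gt0 e.
apply: is_derive_eq.
  apply: (dM (f := fun _ => - p) (g := fun y => (sf y)^-1)); try exact: dC.
  by apply: dV; [rewrite gt_eqF | exact: d_sf].
by rewrite /dpsi; field; rewrite gt_eqF.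
Qed.

Lemma d_Af e k : BMq q e -> is_derive e (basis_vec R k) (Af p q) (2 * e ord0 k * dAf e).
Proof.
move=> B; have s0 := sf_gt0 e; have u0 := uf_gt0 B.
apply: is_derive_eq.
  apply: (dM (f := fun y => q * sf y + p) (g := fun y => (sf y * uf q y)^-1)).
    apply: dD; try exact: dC.
    by apply: dM; try exact: dC; exact: d_sf.
  apply: dV; first by rewrite mulf_neq0 // gt_eqF.
  by apply: dM; [exact: d_sf | exact: d_uf].
by rewrite /dAf; field; rewrite !gt_eqF.
Qed.

Lemma d_Bf e k : BMq q e -> is_derive e (basis_vec R k) (Bf p q) (2 * e ord0 k * dBf e).
Proof.
move=> B; have s0 := sf_gt0 e; have u0 := uf_gt0 B.
apply: is_derive_eq.
  apply: (dM (f := fun y => q * p) (g := fun y => (sf y * uf q y)^-1)); try exact: dC.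
  apply: dV; first by rewrite mulf_neq0 // gt_eqF.
  by apply: dM; [exact: d_sf | exact: d_uf].
by rewrite /dBf; field; rewrite !gt_eqF.
Qed.

Definition Cf (m i j : 'I_n) e := psi p e * (e ord0 i * dl j m + e ord0 j * dl i m) + Af p q e * dl i j * e ord0 m
  + Bf p q e * e ord0 i * e ord0 j * e ord0 m.

Definition dG (m i j k : 'I_n) e :=
  2 * e ord0 k * dpsi e * (e ord0 i * dl j m + e ord0 j * dl i m)
  + psi p e * (dl i k * dl j m + dl j k * dl i m)
  + 2 * e ord0 k * dAf e * dl i j * e ord0 m + Af p q e * dl i j * dl m k
  + 2 * e ord0 k * dBf e * e ord0 i * e ord0 j * e ord0 m
  + Bf p q e * (dl i k * e ord0 j * e ord0 m + e ord0 i * dl j k * e ord0 m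
                + e ord0 i * e ord0 j * dl m k).

Lemma d_Cf m i j k e : BMq q e -> is_derive e (basis_vec R k) (Cf m i j) (dG m i j k e).
Proof.
move=> B.
apply: is_derive_eq.
  apply: dD; [apply: dD|].
  - by apply: dM; [exact: d_psi| dsolve].
  - apply: dM; last exact: is_derive_coord.
    by apply: dM; try exact: dC; exact: d_Af.
  - apply: dM; last exact: is_derive_coord.
    apply: dM; last exact: is_derive_coord.
    apply: dM; [exact: d_Bf| exact: is_derive_coord].
rewrite /dG !bvE; ring.
Qed.

Lemma dChr2 m i j k e : BMq q e -> pd k (chr2 p q m i j) e = dG m i j k e.
Proof.
move=> B.
rewrite /pd (@near_eq_derive _ _ _ (chr2 p q m i j) (Cf m i j)).
  by case: (d_Cf m i j k B) => _ ->.
have := near_BMq B; apply: filterS => y By.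
by rewrite chr2E.
Qed.
End U.



Section V.
Variable R : realType.
Variable n : nat.
Variables p q : R.
Implicit Types (e : 'rV[R]_n).
Local Notation dl := (@dl R n).

Lemma sumGam e (w : 'I_n -> R) l i : BMq q e ->
  \sum_m chr2 p q l i m e * w m = psi p e * e ord0 i * w l
    + psi p e * dl i l * (\sum_m e ord0 m * w m) + Af p q e * e ord0 l * w i
    + Bf p q e * e ord0 i * e ord0 l * (\sum_m e ord0 m * w m).
Proof.
move=> B.
rewrite (eq_bigr (fun m => (psi p e * e ord0 i) * (dl m l * w m) + (Af p q e * e ord0 l) * (dl i m * w m)
  + (psi p e * dl i l + Bf p q e * e ord0 i * e ord0 l) * (e ord0 m * w m))); last first.
  by move=> m _; rewrite chr2E //; ring.
rewrite !big_split /= -!mulr_sumr sum_dl_r sum_dl_l; ring.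
Qed.

Lemma sum_e_chr2 e j k : BMq q e ->
  \sum_m e ord0 m * chr2 p q m j k e = psi p e * (e ord0 j * e ord0 k + e ord0 k * e ord0 j)
   + Af p q e * dl j k * sqnorm e + Bf p q e * e ord0 j * e ord0 k * sqnorm e.
Proof.
move=> B.
rewrite (eq_bigr (fun m => (psi p e * e ord0 j) * (e ord0 m * dl k m) + (psi p e * e ord0 k) * (e ord0 m * dl j m)
  + (Af p q e * dl j k + Bf p q e * e ord0 j * e ord0 k) * (e ord0 m * e ord0 m))); last first.
  by move=> m _; rewrite chr2E //; ring.
rewrite !big_split /= -!mulr_sumr !sum_c_dl -[\sum_m _ * _]/(sqnorm e); ring.
Qed.

Definition c1 e := Af p q e - psi p e + psi p e * Af p q e * sqnorm e.
Definition c2 e := -2 * dpsi p e + Bf p q e + psi p e ^+ 2 + psi p e * Bf p q e * sqnorm e.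
Definition c3 e := 2 * dAf p q e - Bf p q e + Af p q e ^+ 2 + Af p q e * Bf p q e * sqnorm e.

Lemma riemE l i j k e : BMq q e -> riem p q l i j k e =
  c1 e * (dl j k * dl i l - dl i k * dl j l)
  + c2 e * (e ord0 k * e ord0 j * dl i l - e ord0 k * e ord0 i * dl j l)
  + c3 e * (e ord0 l * e ord0 i * dl j k - e ord0 l * e ord0 j * dl i k).
Proof.
move=> B.
rewrite /riem !dChr2 // sumrB.
rewrite (sumGam (fun m => chr2 p q m j k e) l i B) (sumGam (fun m => chr2 p q m i k e) l j B) /=.
rewrite !sum_e_chr2 // !chr2E //.
rewrite /dG /c1 /c2 /c3.
rewrite ?(@dlC R n j i) ?(@dlC R n k i) ?(@dlC R n l i) ?(@dlC R n k j) ?(@dlC R n l j) ?(@dlC R n l k).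
ring.
Qed.
End V.



Section W5.
Variable R : realType.
Variable n : nat.
Variables p q : R.
Implicit Types (e X Y A B C : 'rV[R]_n).
Local Notation dl := (@dl R n).

Lemma innerC A B : inner A B = inner B A.
Proof. by rewrite /inner; apply: eq_bigr => i _; rewrite mulrC. Qed.
Lemma innerDl A B C : inner (A + B) C = inner A C + inner B C.
Proof. by rewrite /inner -big_split; apply: eq_bigr => i _; rewrite !mxE mulrDl. Qed.
Lemma innerBl A B C : inner (A - B) C = inner A C - inner B C.
Proof. by rewrite /inner -sumrB; apply: eq_bigr => i _; rewrite !mxE mulrBl. Qed.
Lemma innerNl A C : inner (- A) C = - inner A C.
Proof. by rewrite /inner -sumrN; apply: eq_bigr => i _; rewrite !mxE mulNr. Qed.
Lemma innerZl a A C : inner (a *: A) C = a * inner A C.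
Proof. by rewrite /inner mulr_sumr; apply: eq_bigr => i _; rewrite !mxE mulrA. Qed.
Lemma innerDr A B C : inner C (A + B) = inner C A + inner C B.
Proof. by rewrite !(innerC C) innerDl. Qed.
Lemma innerBr A B C : inner C (A - B) = inner C A - inner C B.
Proof. by rewrite !(innerC C) innerBl. Qed.
Lemma innerZr a A C : inner C (a *: A) = a * inner C A.
Proof. by rewrite !(innerC C) innerZl. Qed.

Lemma sum_dl_c (c : 'I_n -> R) a : \sum_m c m * dl m a = c a.
Proof. by under eq_bigr do rewrite dlC; exact: sum_c_dl. Qed.

Definition Vr e X Y : 'rV[R]_n :=
  c1 p q e *: (inner Y Y *: X - inner X Y *: Y)
  + (c2 p q e * inner e Y) *: (inner e Y *: X - inner e X *: Y)
  + (c3 p q e * (inner e X * inner Y Y - inner e Y * inner X Y)) *: e.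

Lemma RXYYE e X Y : BMq q e -> RXYY p q e X Y = Vr e X Y.
Proof.
move=> Be; apply/rowP => l; rewrite !mxE.
have Sk : forall i j, \sum_k X ord0 i * Y ord0 j * Y ord0 k * riem p q l i j k e =
   X ord0 i * Y ord0 j * ((c1 p q e * dl i l + c3 p q e * e ord0 l * e ord0 i) * Y ord0 j
     - (c1 p q e * dl j l + c3 p q e * e ord0 l * e ord0 j) * Y ord0 i
     + c2 p q e * (e ord0 j * dl i l - e ord0 i * dl j l) * inner e Y).
  move=> i j.
  rewrite (eq_bigr (fun k => (X ord0 i * Y ord0 j * (c1 p q e * dl i l + c3 p q e * e ord0 l * e ord0 i)) * (dl j k * Y ord0 k)
    + (- (X ord0 i * Y ord0 j * (c1 p q e * dl j l + c3 p q e * e ord0 l * e ord0 j))) * (dl i k * Y ord0 k)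
    + (X ord0 i * Y ord0 j * c2 p q e * (e ord0 j * dl i l - e ord0 i * dl j l)) * (e ord0 k * Y ord0 k))); last first.
    by move=> k _; rewrite riemE //; ring.
  rewrite !big_split /= -!mulr_sumr !sum_dl_l -[\sum_k e ord0 k * Y ord0 k]/(inner e Y); ring.
under eq_bigr do under eq_bigr do rewrite Sk.
have Sj : forall i, \sum_j X ord0 i * Y ord0 j * ((c1 p q e * dl i l + c3 p q e * e ord0 l * e ord0 i) * Y ord0 j
     - (c1 p q e * dl j l + c3 p q e * e ord0 l * e ord0 j) * Y ord0 i
     + c2 p q e * (e ord0 j * dl i l - e ord0 i * dl j l) * inner e Y) =
   X ord0 i * ((c1 p q e * dl i l + c3 p q e * e ord0 l * e ord0 i) * inner Y Y
     - c1 p q e * Y ord0 l * Y ord0 i - c3 p q e * e ord0 l * inner e Y * Y ord0 i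
     + c2 p q e * inner e Y * (inner e Y * dl i l - e ord0 i * Y ord0 l)).
  move=> i.
  rewrite (eq_bigr (fun j => (X ord0 i * (c1 p q e * dl i l + c3 p q e * e ord0 l * e ord0 i)) * (Y ord0 j * Y ord0 j)
    + (- X ord0 i * (c1 p q e * Y ord0 i + c2 p q e * inner e Y * e ord0 i)) * (Y ord0 j * dl j l)
    + (X ord0 i * (- c3 p q e * e ord0 l * Y ord0 i + c2 p q e * inner e Y * dl i l)) * (e ord0 j * Y ord0 j))); last first.
    by move=> j _; ring.
  rewrite !big_split /= -!mulr_sumr !sum_dl_c -[\sum_j e ord0 j * Y ord0 j]/(inner e Y)
     -[\sum_j Y ord0 j * Y ord0 j]/(inner Y Y); ring.
under eq_bigr do rewrite Sj.
rewrite (eq_bigr (fun i => (c1 p q e * inner Y Y + c2 p q e * inner e Y * inner e Y) * (X ord0 i * dl i l)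
   + (c3 p q e * e ord0 l * inner Y Y - c2 p q e * inner e Y * Y ord0 l) * (X ord0 i * e ord0 i)
   + (- c1 p q e * Y ord0 l - c3 p q e * e ord0 l * inner e Y) * (X ord0 i * Y ord0 i))); last first.
  by move=> i _; ring.
rewrite !big_split /= -!mulr_sumr !sum_dl_c -[\sum_i X ord0 i * e ord0 i]/(inner X e)
   -[\sum_i X ord0 i * Y ord0 i]/(inner X Y).
rewrite (innerC X e); ring.
Qed.

Lemma hvE e A B : hv p q e A B = Phi p e * (inner A B + q * inner A e * inner e B).
Proof.
rewrite /hv.
rewrite (eq_bigr (fun i => (A ord0 i * Phi p e) * B ord0 i + (A ord0 i * Phi p e * q * e ord0 i) * inner e B)); last first.
  move=> i _.
  rewrite (eq_bigr (fun j => (A ord0 i * Phi p e) * (dl i j * B ord0 j) + (A ord0 i * Phi p e * q * e ord0 i) * (e ord0 j * B ord0 j))); last first.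
    by move=> j _; rewrite gmatE; ring.
  by rewrite big_split /= -!mulr_sumr sum_dl_l.
rewrite (eq_bigr (fun i => Phi p e * (A ord0 i * B ord0 i) + (Phi p e * q * inner e B) * (A ord0 i * e ord0 i))); last first.
  by move=> i _; ring.
rewrite big_split /= -!mulr_sumr -[\sum_i A ord0 i * B ord0 i]/(inner A B) -[\sum_i A ord0 i * e ord0 i]/(inner A e).
ring.
Qed.
End W5.



Definition Pp (R : realType) (p q t : R) := (2 * p + q) + (2 * q + 2 * p - p ^+ 2) * t + q * t ^+ 2.
Definition Qp (R : realType) (p q t : R) := (2 * p + q) + (2 * q + p * q) * t + q * (1 - p) * t ^+ 2.

Section W6.
Variable R : realType.
Variable n : nat.
Variables p q : R.
Implicit Types (e X Y A B C : 'rV[R]_n).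

Lemma c1E e : BMq q e -> c1 p q e = Pp p q (sqnorm e) / (sf e ^+ 2 * uf q e).
Proof.
move=> B; have s0 := sf_gt0 e; have u0 := uf_gt0 B.
rewrite /c1 /Pp /Af /psi; rewrite /sf /uf in s0 u0 *.
field; by rewrite !gt_eqF.
Qed.

Lemma c2E e : BMq q e -> c2 p q e = p * (p + q - 2 - q * sqnorm e) / (sf e ^+ 2 * uf q e).
Proof.
move=> B; have s0 := sf_gt0 e; have u0 := uf_gt0 B.
rewrite /c2 /Bf /psi /dpsi; rewrite /sf /uf in s0 u0 *.
field; by rewrite !gt_eqF.
Qed.

Lemma c_ident e : BMq q e -> c2 p q e = c3 p q e * uf q e + q * c1 p q e.
Proof.
move=> B; have s0 := sf_gt0 e; have u0 := uf_gt0 B.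
rewrite /c1 /c2 /c3 /Bf /Af /psi /dpsi /dAf; rewrite /sf /uf in s0 u0 *.
field; by rewrite !gt_eqF.
Qed.

Definition Dg X Y := inner X X * inner Y Y - inner X Y ^+ 2.
Definition Eg e X Y := inner e X ^+ 2 * inner Y Y - 2 * inner e X * inner e Y * inner X Y
   + inner e Y ^+ 2 * inner X X.

Lemma num_E e X Y : BMq q e ->
  hv p q e (RXYY p q e X Y) X = Phi p e * (c1 p q e * Dg X Y + c2 p q e * Eg e X Y).
Proof.
move=> B.
rewrite RXYYE // hvE /Vr.
rewrite !(innerDl, innerBl, innerNl, innerZl).
rewrite (c_ident B) /Dg /Eg /uf.
rewrite ?(innerC Y X) ?(innerC X e) ?(innerC Y e) ?(innerC e e).
rewrite (_ : inner e e = sqnorm e) //.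
ring.
Qed.

Lemma den_E e X Y :
  hv p q e X X * hv p q e Y Y - hv p q e X Y ^+ 2 = Phi p e ^+ 2 * (Dg X Y + q * Eg e X Y).
Proof.
rewrite !hvE /Dg /Eg ?(innerC Y X) ?(innerC X e) ?(innerC Y e); ring.
Qed.
End W6.



Section RA.
Variable R : realType.
Implicit Types (p q t w a b c : R).

Lemma NEG a b c : c < 0 -> exists w, 0 <= w /\ a + b * w + c * w ^+ 2 < 0.
Proof.
move=> c0.
set w := (`|a| + `|b|) / (- c) + 1.
have hA : 0 <= `|a| + `|b| by rewrite addr_ge0.
have w1 : 1 <= w by rewrite /w lerDr divr_ge0 // oppr_ge0 ltW.
have cw : c * w = - (`|a| + `|b|) + c.
  by rewrite /w; field; rewrite ?oppr_eq0 lt_eqF.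
exists w; split; first lra.
have ha : a <= `|a| := ler_norm a.
have hb : b * w <= `|b| * w by rewrite ler_wpM2r ?ler_norm //; lra.
have haw : `|a| <= `|a| * w by rewrite ler_peMr //; lra.
have : a + b * w + c * w ^+ 2 <= w * (`|a| + `|b| + c * w).
  rewrite expr2; nra.
rewrite cw; nra.
Qed.

Lemma NEGq q a b c : q < 0 -> c - b / q + a / q ^+ 2 < 0 ->
  exists t, 0 <= t /\ 0 < 1 + q * t /\ c + b * t + a * t ^+ 2 < 0.
Proof.
move=> q0 H.
have [w [w0 Hw]] := NEG (c) (2 * c - b / q) H.
have q0' : q != 0 by rewrite lt_eqF.
have w1 : 0 < 1 + w by lra.
have d0 : 0 < - q * (1 + w) by apply: mulr_gt0; lra.
exists (w / (- q * (1 + w))); split; [|split].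
- by rewrite divr_ge0 // ltW.
- have -> : 1 + q * (w / (- q * (1 + w))) = (1 + w)^-1.
    by field; rewrite q0' gt_eqF.
  by rewrite invr_gt0.
- have E : c + b * (w / (- q * (1 + w))) + a * (w / (- q * (1 + w))) ^+ 2
         = (c + (2 * c - b / q) * w + (c - b / q + a / q ^+ 2) * w ^+ 2) / (1 + w) ^+ 2.
    by field; rewrite q0' gt_eqF.
  by rewrite E pmulr_llt0 // invr_gt0 exprn_gt0.
Qed.


Lemma GP_pos p q t : Gamma_plus p q -> 0 <= t -> 0 < Pp p q t /\ 0 < Qp p q t.
Proof.
move=> G t0; rewrite /Pp /Qp.
case: G => [[/andP [h1 h2] hq] | [[/andP [h1 h2] hq] | [/andP [h1 h2] hq]]].
- have p8 : 0 < 8 + p by lra.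
  move: hq; rewrite /lam ltr_pdivrMr // => hq.
  have q0 : 0 < q by nra.
  have K : 0 < q * (p + 8) + 8 * (p - 1) by lra.
  split.
  + have h4 : (p - 2) ^+ 2 * (p + 8) <= 32 * (1 - p).
      have -> : 32 * (1 - p) = (p - 2) ^+ 2 * (p + 8) - p * (p + 2) ^+ 2 by ring.
      have : 0 <= - p * (p + 2) ^+ 2 by rewrite mulr_ge0 // ?sqr_ge0; lra.
      lra.
    have h5 : (p - 2) ^+ 2 < 4 * q.
      have : (p - 2) ^+ 2 * (p + 8) < 4 * q * (p + 8) by lra.
      by rewrite ltr_pM2r //; lra.
    have I : 4 * q * ((2 * p + q) + (2 * q + 2 * p - p ^+ 2) * t + q * t ^+ 2)
       = (2 * q * t + (2 * q + 2 * p - p ^+ 2)) ^+ 2 + p ^+ 2 * (4 * q - (p - 2) ^+ 2) by ring.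
    have : 0 < 4 * q * ((2 * p + q) + (2 * q + 2 * p - p ^+ 2) * t + q * t ^+ 2).
      rewrite I; apply: ltr_wpDl; first exact: sqr_ge0.
      apply: mulr_gt0; last lra.
      by rewrite exprn_even_gt0 //= lt_eqF //; lra.
    by rewrite pmulr_rgt0 //; lra.
  + have I : 4 * (q * (1 - p)) * ((2 * p + q) + (2 * q + p * q) * t + q * (1 - p) * t ^+ 2)
       = (2 * q * (1 - p) * t + q * (2 + p)) ^+ 2 + q * (- p) * (q * (p + 8) + 8 * (p - 1)) by ring.
    have : 0 < 4 * (q * (1 - p)) * ((2 * p + q) + (2 * q + p * q) * t + q * (1 - p) * t ^+ 2).
      rewrite I; apply: ltr_wpDl; first exact: sqr_ge0.
      by apply: mulr_gt0 => //; apply: mulr_gt0 => //; lra.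
    by rewrite pmulr_rgt0 //; apply: mulr_gt0 => //; apply: mulr_gt0 => //; lra.
- have q0 : 0 < q by lra.
  split.
  + have : 0 <= (2 * q + 2 * p - p ^+ 2) * t by apply: mulr_ge0 => //; nra.
    have : 0 <= q * t ^+ 2 by apply: mulr_ge0 => //; [lra| exact: sqr_ge0].
    lra.
  + have : 0 <= (2 * q + p * q) * t by apply: mulr_ge0 => //; nra.
    have : 0 <= q * (1 - p) * t ^+ 2 by apply: mulr_ge0; [nra| exact: sqr_ge0].
    lra.
- split.
  + have : 0 <= (2 * q + 2 * p - p ^+ 2) * t by apply: mulr_ge0 => //; nra.
    have : 0 <= q * t ^+ 2 by apply: mulr_ge0 => //; [lra| exact: sqr_ge0].
    lra.
  + have : 0 <= (2 * q + p * q) * t by apply: mulr_ge0 => //; nra.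
    have : 0 <= q * (1 - p) * t ^+ 2 by apply: mulr_ge0; [nra| exact: sqr_ge0].
    lra.
Qed.

Lemma RA1 p q t : Gamma p q -> 0 <= t -> 0 < 1 + q * t -> 0 < Pp p q t /\ 0 < Qp p q t.
Proof.
move=> G t0 u0.
case: G => [[hpq hq] | [[hq /andP [h1 h2]] | G]]; last exact: GP_pos.
- have hq' : q = 1 - p by lra.
  have p1 : 1 < p by lra.
  split.
  + have -> : Pp p q t = (1 + q * t) * (p + 1 + t) by rewrite /Pp hq'; ring.
    by apply: mulr_gt0 => //; lra.
  + have -> : Qp p q t = (1 + q * t) * (p + (1 + q * t)) by rewrite /Qp hq'; ring.
    by apply: mulr_gt0 => //; lra.
- rewrite /Pp /Qp hq; split; last lra.
  have : 0 <= (2 * 0 + 2 * p - p ^+ 2) * t by apply: mulr_ge0 => //; nra.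
  lra.
Qed.

Lemma RA2 p q t : Gamma' p q -> 0 <= t -> 0 < 1 + q * t -> 0 < Qp p q t.
Proof.
move=> G t0 u0.
case: G => [[hpq hq] | [[hq h1] | G]]; last by case: (GP_pos G t0).
- have -> : Qp p q t = (1 + q * t) * (p + (1 + q * t)) + (p + q - 1) * (1 - q * t ^+ 2)
    by rewrite /Qp; ring.
  apply: ltr_pwDl; first by apply: mulr_gt0 => //; lra.
  apply: mulr_ge0; first lra.
  have : q * t ^+ 2 <= 0 by rewrite nmulr_rle0 ?sqr_ge0.
  lra.
- by rewrite /Qp hq; lra.
Qed.

Lemma RAqpos p q : 0 < q -> ~ Gamma_plus p q ->
  exists t, 0 <= t /\ 0 < 1 + q * t /\ Qp p q t <= 0.
Proof.
move=> q0 nG.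
have [c0|c0] := leP (2 * p + q) 0.
  by exists 0; split; [lra | split; rewrite /Qp; lra].
have [p1|p1] := ltP 1 p.
  have hc : q * (1 - p) < 0 by nra.
  have [w [w0 Hw]] := NEG (2 * p + q) (2 * q + p * q) hc.
  exists w; split => //; split; first by nra.
  by rewrite /Qp; lra.
have p2 : p < -2.
  rewrite ltNge; apply/negP => h; apply: nG; right.
  have [p0|p0] := leP p 0; first by left; split => //; apply/andP; split.
  by right; split => //; apply/andP; split => //; lra.
have K : q * (p + 8) + 8 * (p - 1) <= 0.
  have [p8|p8] := leP p (-8); first by nra.
  have : q <= lam p.
    rewrite leNgt; apply/negP => h; apply: nG; left; split => //.
    by apply/andP; split; lra.
  rewrite /lam ler_pdivlMr; lra.
set ts := - (p + 2) / (2 * (1 - p)).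
have d0 : 0 < 2 * (1 - p) by lra.
have ts0 : 0 <= ts by rewrite /ts divr_ge0 //; lra.
exists ts; split => //; split; first by nra.
have I : Qp p q ts = q * (- p) * (q * (p + 8) + 8 * (p - 1)) / (4 * (q * (1 - p))).
  rewrite /Qp /ts; field.
  apply/andP; split; rewrite ?mulf_neq0 ?gt_eqF //; lra.
have D4 : 0 < 4 * (q * (1 - p)) by apply: mulr_gt0; [lra|apply: mulr_gt0; lra].
rewrite I pmulr_lle0 ?invr_gt0 // pmulr_rle0 //; apply: mulr_gt0 => //; lra.
Qed.

Lemma Qneg p q : q < 0 -> p + q < 1 -> exists t, 0 <= t /\ 0 < 1 + q * t /\ Qp p q t <= 0.
Proof.
move=> q0 pq.
have q0' : q != 0 by rewrite lt_eqF.
have H : (2 * p + q) - (2 * q + p * q) / q + q * (1 - p) / q ^+ 2 < 0.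
  have -> : (2 * p + q) - (2 * q + p * q) / q + q * (1 - p) / q ^+ 2
     = - ((q - 1) * (p + q - 1) / (- q)) by field.
  rewrite oppr_lt0 divr_gt0 //; nra.
have [t [t0 [u0 Ht]]] := NEGq q0 H.
by exists t; split => //; split => //; rewrite /Qp; lra.
Qed.

Lemma Pneg p q : q < 0 -> 1 < p + q -> exists t, 0 <= t /\ 0 < 1 + q * t /\ Pp p q t <= 0.
Proof.
move=> q0 pq.
have q0' : q != 0 by rewrite lt_eqF.
have H : (2 * p + q) - (2 * q + 2 * p - p ^+ 2) / q + q / q ^+ 2 < 0.
  have -> : (2 * p + q) - (2 * q + 2 * p - p ^+ 2) / q + q / q ^+ 2
     = - ((p + q - 1) ^+ 2 / (- q)) by field.
  rewrite oppr_lt0 divr_gt0 //; first by rewrite exprn_even_gt0 //= gt_eqF //; lra.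
  lra.
have [t [t0 [u0 Ht]]] := NEGq q0 H.
by exists t; split => //; split => //; rewrite /Pp; lra.
Qed.

Lemma RA3 p q : ~ Gamma p q ->
  exists t, 0 <= t /\ 0 < 1 + q * t /\ (Pp p q t <= 0 \/ Qp p q t <= 0).
Proof.
move=> nG.
have [q0|q0|q0] := ltgtP q 0.
- have [pq|pq|pq] := ltgtP (p + q) 1.
  + by have [t [? [? ?]]] := Qneg q0 pq; exists t; do !split => //; right.
  + by have [t [? [? ?]]] := Pneg q0 pq; exists t; do !split => //; left.
  + by exfalso; apply: nG; left.
- have nGp : ~ Gamma_plus p q by move=> h; apply: nG; right; right.
  by have [t [? [? ?]]] := RAqpos q0 nGp; exists t; do !split => //; right.
- have [p0|p0] := leP p 0.
    by exists 0; split => //; split; [lra| left; rewrite /Pp q0; lra].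
  have p2 : 2 < p.
    rewrite ltNge; apply/negP => h; apply: nG; right; left; split => //.
    by apply/andP; split.
  exists (2 / (p - 2)); split; first by rewrite divr_ge0 //; lra.
  split; first by rewrite q0; lra.
  left; rewrite /Pp q0.
  have -> : 2 * p + 0 + (2 * 0 + 2 * p - p ^+ 2) * (2 / (p - 2)) + 0 * (2 / (p - 2)) ^+ 2 = 0.
    by field; rewrite subr_eq0 gt_eqF.
  by [].
Qed.

Lemma RA4 p q : ~ Gamma' p q -> exists t, 0 <= t /\ 0 < 1 + q * t /\ Qp p q t <= 0.
Proof.
move=> nG.
have [q0|q0|q0] := ltgtP q 0.
- have pq : p + q < 1.
    rewrite ltNge; apply/negP => h; apply: nG; left; split => //.
  exact: Qneg q0 pq.
- have nGp : ~ Gamma_plus p q by move=> h; apply: nG; right; right.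
  exact: RAqpos q0 nGp.
- have p0 : p <= 0.
    rewrite leNgt; apply/negP => h; apply: nG; right; left; split => //.
  by exists 0; split => //; split; [lra| rewrite /Qp q0; lra].
Qed.
End RA.



Section G.
Variable R : realType.
Variable n : nat.
Implicit Types (e X Y A B C : 'rV[R]_n).

Lemma inner_ge0 A : 0 <= inner A A.
Proof. exact: sqnorm_ge0. Qed.

Lemma innerNr A C : inner C (- A) = - inner C A.
Proof. by rewrite !(innerC C) innerNl. Qed.

Lemma inner0 A : inner A A = 0 -> A = 0.
Proof.
move=> H; apply/rowP => i; rewrite mxE.
have h : A ord0 i * A ord0 i = 0.
  apply: (@psumr_eq0P _ 'I_n xpredT (fun i => A ord0 i * A ord0 i) _ H i isT).
  by move=> j _; rewrite -expr2 sqr_ge0.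
by move/eqP: h; rewrite mulf_eq0 orbb => /eqP.
Qed.

Lemma Eg_ge0 e X Y : 0 <= Eg e X Y.
Proof.
have -> : Eg e X Y = inner (inner e X *: Y - inner e Y *: X) (inner e X *: Y - inner e Y *: X).
  rewrite !(innerDl, innerDr, innerBl, innerBr, innerNl, innerNr, innerZl, innerZr) /Eg ?(innerC Y X); ring.
exact: inner_ge0.
Qed.

Lemma Eg_le e X Y : 0 < Dg X Y -> Eg e X Y <= sqnorm e * Dg X Y.
Proof.
move=> D0.
set a := inner X X; set b := inner Y Y; set m := inner X Y; set x := inner e X; set y := inner e Y.
set Z := Dg X Y *: e - (x * b - y * m) *: X - (y * a - x * m) *: Y.
have : inner Z Z = Dg X Y * (sqnorm e * Dg X Y - Eg e X Y).
  rewrite /Z !(innerDl, innerDr, innerBl, innerBr, innerNl, innerNr, innerZl, innerZr).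
  rewrite /Dg /Eg -/a -/b -/m -/x -/y ?(innerC Y X) ?(innerC X e) ?(innerC Y e) -/m -/x -/y.
  rewrite (_ : inner e e = sqnorm e) //; ring.
move=> E; have := inner_ge0 Z; rewrite E pmulr_rge0 //; lra.
Qed.

Lemma Dg_pos X Y : row_free (col_mx X Y) -> 0 < Dg X Y.
Proof.
move=> RF; rewrite ltNge; apply/negP => Dle.
have key : forall a b : R, (a != 0) \/ (b != 0) -> a *: X + b *: Y = 0 -> False.
  move=> a b ab H0.
  have : row_mx (a%:M : 'M[R]_1) (b%:M : 'M[R]_1) *m col_mx X Y == 0.
    by rewrite mul_row_col !mul_scalar_mx H0.
  rewrite mulmx_free_eq0 // row_mx_eq0 => /andP [/eqP ha /eqP hb].
  have ha' : a = 0 by move/matrixP: ha => /(_ ord0 ord0); rewrite !mxE.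
  have hb' : b = 0 by move/matrixP: hb => /(_ ord0 ord0); rewrite !mxE.
  by case: ab => /eqP; rewrite ?ha' ?hb'.
have [a0|a0] := eqVneq (inner X X) 0.
  have X0 := inner0 a0.
  by apply: (key 1 0); [left; rewrite oner_eq0 | rewrite X0 scaler0 scale0r addr0].
have a0' : 0 < inner X X by rewrite lt_def a0 inner_ge0.
set Z := inner X X *: Y - inner X Y *: X.
have hZ : inner Z Z = inner X X * Dg X Y.
  rewrite /Z !(innerDl, innerDr, innerBl, innerBr, innerNl, innerNr, innerZl, innerZr) /Dg ?(innerC Y X); ring.
have Z0 : inner Z Z = 0.
  apply/eqP; rewrite eq_le inner_ge0 andbT hZ; rewrite pmulr_rle0 //.
apply: (key (- inner X Y) (inner X X)); first by right.
by rewrite -(inner0 Z0) /Z addrC scaleNr.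
Qed.

Lemma Eg_2 (e X Y : 'rV[R]_2) : Eg e X Y = sqnorm e * Dg X Y.
Proof.
by rewrite /Eg /Dg /sqnorm /inner !big_ord_recr !big_ord0 /=; ring.
Qed.
End G.



Section F.
Variable R : realType.
Variable n : nat.
Variables p q : R.
Implicit Types (e X Y A B C : 'rV[R]_n).

Definition Nm e X Y := Pp p q (sqnorm e) * Dg X Y + p * (p + q - 2 - q * sqnorm e) * Eg e X Y.

Lemma Kpos e X Y : BMq q e -> 0 < Dg X Y -> 0 < Dg X Y + q * Eg e X Y.
Proof.
move=> B D0; have u0 := uf_gt0 B; have E0 := Eg_ge0 e X Y; have E1 := Eg_le e D0.
rewrite /uf in u0.
have [q0|q0] := leP 0 q.
  have : 0 <= q * Eg e X Y by apply: mulr_ge0.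
  lra.
have : q * (sqnorm e * Dg X Y) <= q * Eg e X Y by rewrite ler_wnM2l //; lra.
have : 0 < Dg X Y * (1 + q * sqnorm e) by apply: mulr_gt0.
nra.
Qed.

Lemma sectE e X Y : BMq q e -> 0 < Dg X Y -> sectional p q e X Y =
  Nm e X Y * (Phi p e / (sf e ^+ 2 * uf q e) / (Phi p e ^+ 2 * (Dg X Y + q * Eg e X Y))).
Proof.
move=> B D0; have K0 := Kpos B D0; have s0 := sf_gt0 e; have u0 := uf_gt0 B.
have P0 := Phi_gt0 p e.
rewrite /sectional num_E // den_E c1E // c2E // /Nm.
field; by rewrite !gt_eqF.
Qed.

Lemma sect_pos e X Y : BMq q e -> 0 < Dg X Y ->
  (0 < sectional p q e X Y) = (0 < Nm e X Y).
Proof.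
move=> B D0; have K0 := Kpos B D0; have s0 := sf_gt0 e; have u0 := uf_gt0 B.
have P0 := Phi_gt0 p e.
rewrite sectE // pmulr_lgt0 //.
apply: divr_gt0; first by apply: divr_gt0 => //; apply: mulr_gt0 => //; rewrite exprn_gt0.
by apply: mulr_gt0 => //; rewrite exprn_gt0.
Qed.

Lemma fwd e X Y : BMq q e -> row_free (col_mx X Y) ->
  0 < Pp p q (sqnorm e) -> 0 < Qp p q (sqnorm e) -> 0 < sectional p q e X Y.
Proof.
move=> B RF P0 Q0; have D0 := Dg_pos RF; rewrite sect_pos //.
have E0 := Eg_ge0 e X Y; have E1 := Eg_le e D0; have t0 := sqnorm_ge0 e.
have I : sqnorm e * Nm e X Y = Pp p q (sqnorm e) * (sqnorm e * Dg X Y - Eg e X Y)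
    + Qp p q (sqnorm e) * Eg e X Y by rewrite /Nm /Pp /Qp; ring.
have [tz|tp] := eqVneq (sqnorm e) 0.
  have Ez : Eg e X Y = 0 by move: E1; rewrite tz mul0r => E1; lra.
  by rewrite /Nm Ez mulr0 addr0; apply: mulr_gt0.
have tp' : 0 < sqnorm e by rewrite lt_def tp t0.
have : 0 < sqnorm e * Nm e X Y.
  rewrite I.
  have h1 : 0 <= Pp p q (sqnorm e) * (sqnorm e * Dg X Y - Eg e X Y) by apply: mulr_ge0; lra.
  have [Ez|Ep] := eqVneq (Eg e X Y) 0.
    rewrite Ez mulr0 addr0 subr0; apply: mulr_gt0 => //; exact: mulr_gt0.
  have : 0 < Qp p q (sqnorm e) * Eg e X Y by apply: mulr_gt0 => //; rewrite lt_def Ep E0.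
  lra.
by rewrite pmulr_rgt0.
Qed.
End F.

Lemma fwd2 (R : realType) (p q : R) (e X Y : 'rV[R]_2) : BMq q e -> row_free (col_mx X Y) ->
  0 < Qp p q (sqnorm e) -> 0 < sectional p q e X Y.
Proof.
move=> B RF Q0; have D0 := Dg_pos RF; rewrite sect_pos //.
rewrite /Nm Eg_2.
have -> : Pp p q (sqnorm e) * Dg X Y + p * (p + q - 2 - q * sqnorm e) * (sqnorm e * Dg X Y)
  = Qp p q (sqnorm e) * Dg X Y by rewrite /Pp /Qp; ring.
exact: mulr_gt0.
Qed.



Section Wt.
Variable R : realType.
Variable n : nat.
Variables p q : R.
Implicit Types (e X Y A B C : 'rV[R]_n).
Local Notation bv := (basis_vec R).
Local Notation dl := (@dl R n).

Lemma inner_bv (a b : 'I_n) : inner (bv a) (bv b) = dl a b.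
Proof. by rewrite /inner; under eq_bigr do rewrite !bvE; rewrite sum_dl_r. Qed.

Lemma inner_bvr A (a : 'I_n) : inner A (bv a) = A ord0 a.
Proof. by rewrite /inner; under eq_bigr do rewrite !bvE; rewrite sum_dl_c. Qed.

Lemma mulmxT X Y : X *m Y^T = (inner X Y)%:M.
Proof.
apply/matrixP => i j; rewrite !ord1 !mxE eqxx mulr1n /inner.
by apply: eq_bigr => k _; rewrite !mxE.
Qed.

Lemma rf_bv (a b : 'I_n) : a != b -> row_free (col_mx (bv a) (bv b)).
Proof.
move=> ab; apply/row_freeP; exists (col_mx (bv a) (bv b))^T.
rewrite tr_col_mx mul_col_row !mulmxT !inner_bv /dl eqxx (negbTE ab) eq_sym (negbTE ab).
by rewrite eqxx scalar_mx_block /= raddf0.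
Qed.

Lemma wit_rad t (c b : 'I_n) : c != b -> 0 <= t -> 0 < 1 + q * t -> Qp p q t <= 0 ->
  exists e X Y, BMq q e /\ row_free (col_mx X Y) /\ ~ (0 < sectional p q e X Y).
Proof.
move=> cb t0 u0 Q0.
set r := Num.sqrt t.
have r2 : r ^+ 2 = t by rewrite sqr_sqrtr.
set e := r *: bv c.
have se : sqnorm e = t.
  by rewrite /sqnorm /e innerZl innerZr inner_bv /dl eqxx mulr1 -expr2.
have Be : BMq q e by rewrite /BMq se; lra.
have D1 : Dg (bv c) (bv b) = 1 by rewrite /Dg !inner_bv /dl !eqxx (negbTE cb) /=; ring.
exists e, (bv c), (bv b); split => //; split; first exact: rf_bv.
rewrite sect_pos // ?D1 //.
have -> : Nm p q e (bv c) (bv b) = Qp p q t.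
  rewrite /Nm /Eg D1 se /e !innerZl !inner_bv /dl !eqxx (negbTE cb) /Pp /Qp -r2 /=; ring.
by apply/negP; rewrite -leNgt.
Qed.

Lemma wit_tan t (a b c : 'I_n) : a != b -> c != a -> c != b -> 0 <= t -> 0 < 1 + q * t ->
  Pp p q t <= 0 ->
  exists e X Y, BMq q e /\ row_free (col_mx X Y) /\ ~ (0 < sectional p q e X Y).
Proof.
move=> ab ca cb t0 u0 P0.
set r := Num.sqrt t.
have r2 : r ^+ 2 = t by rewrite sqr_sqrtr.
set e := r *: bv c.
have se : sqnorm e = t.
  by rewrite /sqnorm /e innerZl innerZr inner_bv /dl eqxx mulr1 -expr2.
have Be : BMq q e by rewrite /BMq se; lra.
have D1 : Dg (bv a) (bv b) = 1 by rewrite /Dg !inner_bv /dl !eqxx (negbTE ab) /=; ring.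
exists e, (bv a), (bv b); split => //; split; first exact: rf_bv.
rewrite sect_pos // ?D1 //.
have -> : Nm p q e (bv a) (bv b) = Pp p q t.
  rewrite /Nm /Eg D1 se /e !innerZl !inner_bv /dl (negbTE ca) (negbTE cb) /=; ring.
by apply/negP; rewrite -leNgt.
Qed.
End Wt.


End Aux.
Import Aux.

Theorem theorem2p8 (R : realType) (n : nat) (p q : R) :
  ((3 <= n)%N -> (vertical_positive n p q <-> Gamma p q)) /\
  (n = 2%N -> (vertical_positive n p q <-> Gamma' p q)).
Proof.
split.
- move=> n3; split.
  + move=> vp; have [//|nG] := pselect (Gamma p q).
    have h0 : (0 < n)%N by apply: leq_trans n3.
    have h1 : (1 < n)%N by apply: leq_trans n3.
    have h2 : (2 < n)%N by [].
    pose i0 := Ordinal h0; pose i1 := Ordinal h1; pose i2 := Ordinal h2.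
    have [t [t0 [u0 [P0|Q0]]]] := RA3 nG.
    * have [e [X [Y [Be [RF ns]]]]] := @wit_tan R n p q t i1 i2 i0 isT isT isT t0 u0 P0.
      by exfalso; apply: ns; apply: vp.
    * have [e [X [Y [Be [RF ns]]]]] := @wit_rad R n p q t i0 i1 isT t0 u0 Q0.
      by exfalso; apply: ns; apply: vp.
  + move=> G e X Y Be RF.
    have t0 := sqnorm_ge0 e; have u0 := uf_gt0 Be; rewrite /uf in u0.
    have [P0 Q0] := RA1 G t0 u0.
    exact: fwd.
- move=> n2; subst n; split.
  + move=> vp; have [//|nG] := pselect (Gamma' p q).
    have [t [t0 [u0 Q0]]] := RA4 nG.
    have [e [X [Y [Be [RF ns]]]]] := @wit_rad R 2 p q t ord0 (@Ordinal 2 1 isT) isT t0 u0 Q0.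
    by exfalso; apply: ns; apply: vp.
  + move=> G e X Y Be RF.
    have t0 := sqnorm_ge0 e; have u0 := uf_gt0 Be; rewrite /uf in u0.
    exact: fwd2 (RA2 G t0 u0).
Qed.
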